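(* Let $S\subseteq\mathbb{M}^\Sigma$ be a masked semilinear set. Then there exists a deterministic automaton $\mathcal{A}$ over $\Sigma$ such that $\Psi(\mathfrak{J}(\mathcal{A}))=S$.
   Context: An automaton is $\mathcal{A}=\langle\Sigma,Q,\delta,Q_0,\alpha\rangle$ with B\''uchi acceptance (a run is accepting if it visits $\alpha$ infinitely often); it is deterministic if $|Q_0|=1$ and $|\delta(q,\sigma)|=1$ for all $q,\sigma$. For $w\in\Sigma^\omega$, $\Psi(w)\in\mathbb{N}_\infty^\Sigma$ gives for each letter its number of occurrences (or $\infty$); $w\sim w'$ iff $\Psi(w)=\Psi(w')$; $\mathfrak{J}(\mathcal{A})=\{w\in\Sigma^\omega:\exists w'\sim w,\ w'\in\mathfrak{L}(\mathcal{A})\}$. $\mathbb{M}^\Sigma=\mathbb{N}_\infty^\Sigma\setminus\mathbb{N}^\Sigma$. A mask is $\mathfrak{m}\in\{0,\infty\}^\Sigma\setminus\{\vec 0\}$; $\vec x\oplus\mathfrak{m}$ has coordinate $\vec x(\sigma)$ where $\mathfrak{m}(\sigma)=0$ and $\infty$ elsewhere. A masked semilinear set is $\bigcup_{\mathfrak{m}}\{\vec x\oplus\mathfrak{m}:\vec x\in S_\mathfrak{m}\}$ over all masks, with each $S_\mathfrak{m}\subseteq\mathbb{N}^\Sigma$ semilinear (possibly empty). *)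

(* Defs.v *)
From mathcomp Require Import all_boot.
Unset Strict Implicit. Unset Printing Implicit Defensive.

Definition oword (Sigma : Type) := nat -> Sigma.

(* Büchi automaton <Sigma, Q, delta, Q0, alpha> with a finite state set *)
Record automaton (Sigma : finType) := Automaton {
  state : finType;
  delta : state -> Sigma -> {set state};
  init  : {set state};
  acc   : {set state} }.
Arguments state {Sigma}.
Arguments delta {Sigma}.
Arguments init {Sigma}.
Arguments acc {Sigma}.

Definition deterministic {Sigma : finType} (A : automaton Sigma) : Prop :=
  #|init A| = 1 /\ forall q s, #|delta A q s| = 1.

Definition run {Sigma : finType} (A : automaton Sigma) (w : oword Sigma)
  (r : nat -> state A) : Prop :=
  r 0 \in init A /\ forall n, r n.+1 \in delta A (r n) (w n).

Definition accepting_run {Sigma : finType} (A : automaton Sigma) (w : oword Sigma)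
  (r : nat -> state A) : Prop :=
  run A w r /\ forall N, exists n, N <= n /\ r n \in acc A.

Definition lang {Sigma : finType} (A : automaton Sigma) (w : oword Sigma) : Prop :=
  exists r, accepting_run A w r.

(* extended naturals N_inf : Some k = k, None = infinity *)
Definition ninf := option nat.

Definition cnt {Sigma : finType} (w : oword Sigma) (a : Sigma) (n : nat) : nat :=
  \sum_(i < n) (w i == a).

Definition parikh {Sigma : finType} (w : oword Sigma) (v : {ffun Sigma -> ninf}) : Prop :=
  forall a, match v a with
            | Some k => exists N, forall n, N <= n -> cnt w a n = k
            | None => forall k, exists n, k <= cnt w a n
            end.

Definition parikh_equiv {Sigma : finType} (w w' : oword Sigma) : Prop :=
  exists v, parikh w v /\ parikh w' v.

Definition Jclosure {Sigma : finType} (A : automaton Sigma) (w : oword Sigma) : Prop :=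
  exists w', parikh_equiv w w' /\ lang A w'.

Definition linear_set {Sigma : finType} (b : {ffun Sigma -> nat})
  (P : seq {ffun Sigma -> nat}) (x : {ffun Sigma -> nat}) : Prop :=
  exists lam : nat -> nat,
    forall a, x a = b a + \sum_(i < size P) lam i * (nth b P i) a.

Definition semilinear {Sigma : finType} (S : {ffun Sigma -> nat} -> Prop) : Prop :=
  exists L : seq ({ffun Sigma -> nat} * seq {ffun Sigma -> nat}),
    forall x, S x <-> exists2 bP, bP \in L & linear_set bP.1 bP.2 x.

Definition is_mask {Sigma : finType} (m : {ffun Sigma -> ninf}) : Prop :=
  (forall a, m a = Some 0 \/ m a = None) /\ exists a, m a = None.

Definition mask_add {Sigma : finType} (x : {ffun Sigma -> nat}) (m : {ffun Sigma -> ninf})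
  : {ffun Sigma -> ninf} :=
  [ffun a => if m a is Some 0 then Some (x a) else None].

Definition masked_semilinear {Sigma : finType} (S : {ffun Sigma -> ninf} -> Prop) : Prop :=
  exists Sm : {ffun Sigma -> ninf} -> {ffun Sigma -> nat} -> Prop,
    (forall m, is_mask m -> semilinear (Sm m)) /\
    forall v, S v <-> exists m, is_mask m /\ exists2 x, Sm m x & v = mask_add x m.

(* Main.v *)
Require Import Defs.
From mathcomp Require Import all_boot.
From Stdlib Require Import Classical ClassicalEpsilon.
Set Implicit Arguments. Unset Strict Implicit. Unset Printing Implicit Defensive.

Lemma cntS (Sigma : finType) (w : oword Sigma) a n :
  cnt w a n.+1 = cnt w a n + (w n == a).
Proof. by rewrite /cnt big_ord_recr. Qed.

Lemma cnt_mono (Sigma : finType) (w : oword Sigma) a m n :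
  m <= n -> cnt w a m <= cnt w a n.
Proof.
elim: n => [|n IH]; first by rewrite leqn0 => /eqP->.
rewrite leq_eqVlt => /orP[/eqP->//|/IH H].
rewrite cntS; exact: leq_trans H (leq_addr _ _).
Qed.

Lemma cnt_mkseq (Sigma : finType) (w : oword Sigma) a n :
  cnt w a n = count_mem a (mkseq w n).
Proof.
elim: n => [|n IH]; first by rewrite /cnt big_ord0.
by rewrite cntS mkseqS -cats1 count_cat IH /= eq_sym addn0.
Qed.

Lemma ev_unb (Sigma : finType) (w : oword Sigma) a k :
  (exists N, forall n, N <= n -> cnt w a n = k) ->
  (forall k, exists n, k <= cnt w a n) -> False.
Proof.
move=> [N HN] /(_ k.+1) [n Hn].
have := cnt_mono w a (leq_maxr N n); rewrite (HN _ (leq_maxl N n)) => H.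
by have := leq_trans Hn H; rewrite ltnn.
Qed.

Lemma parikh_uniq (Sigma : finType) (w : oword Sigma) v v' :
  parikh w v -> parikh w v' -> v = v'.
Proof.
move=> H H'; apply/ffunP => a; move: (H a) (H' a).
case: (v a) => [k|]; case: (v' a) => [k'|] //.
- move=> [N1 h1] [N2 h2].
  by rewrite -(h1 (maxn N1 N2)) ?leq_maxl // -(h2 (maxn N1 N2)) ?leq_maxr.
- by move=> h1 h2; case: (ev_unb h1 h2).
- by move=> h1 h2; case: (ev_unb h2 h1).
Qed.

Lemma inf_unb (Sigma : finType) (w : oword Sigma) a :
  (forall N, exists n, N <= n /\ w n = a) -> forall k, exists n, k <= cnt w a n.
Proof.
move=> H; elim=> [|k [n Hn]]; first by exists 0.
have [m [Hm Hw]] := H n; exists m.+1.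
rewrite cntS Hw eqxx addn1 ltnS; exact: leq_trans Hn (cnt_mono _ _ Hm).
Qed.

Lemma inf_pigeon_seq (T : eqType) (s : seq T) (P : T -> nat -> Prop) :
  (forall N, exists n, N <= n /\ exists2 g, g \in s & P g n) ->
  exists g, forall N, exists n, N <= n /\ P g n.
Proof.
elim: s => [|a s IH] H.
  by have [n [_ [g]]] := H 0.
case: (classic (forall N, exists n, N <= n /\ P a n)) => Ha; first by exists a.
have [N0 HN0] := not_all_ex_not _ _ Ha.
apply: IH => N; have [n [Hn [g Hg HP]]] := H (maxn N N0).
exists n; split; first exact: leq_trans (leq_maxl _ _) Hn.
move: Hg; rewrite in_cons => /orP[/eqP Eg|Hg]; last by exists g.
case: HN0; exists n; split; first exact: leq_trans (leq_maxr _ _) Hn.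
by rewrite -Eg.
Qed.

Lemma inf_pigeon (T : finType) (P : T -> nat -> Prop) :
  (forall N, exists n, N <= n /\ exists g, P g n) ->
  exists g, forall N, exists n, N <= n /\ P g n.
Proof.
move=> H; apply: (@inf_pigeon_seq _ (enum T)) => N.
have [n [Hn [g Hg]]] := H N; exists n; split=> //; exists g => //.
by rewrite mem_enum.
Qed.

Definition maskof (Sigma : finType) (M : {set Sigma}) : {ffun Sigma -> ninf} :=
  [ffun a => if a \in M then None else Some 0].

Definition rst (Sigma : finType) (M : {set Sigma}) (y : {ffun Sigma -> nat}) :
  {ffun Sigma -> nat} := [ffun c => if c \in M then 0 else y c].

Definition nxt (Sigma : finType) (M R : {set Sigma}) (a : Sigma) : {set Sigma} :=
  if (a |: R) == M then set0 else a |: R.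

Section Constr.
Variable Sigma : finType.
Variable L : {set Sigma} -> seq ({ffun Sigma -> nat} * seq {ffun Sigma -> nat}).

Definition trip := ({set Sigma} * ({ffun Sigma -> nat} * seq {ffun Sigma -> nat}))%type.
Definition Gl : seq trip :=
  [seq (M, bP) | M <- enum [pred M : {set Sigma} | M != set0], bP <- L M].
Definition dflt : trip := (set0, ([ffun => 0], [::])).
Definition G := size Gl.
Definition Mg (g : 'I_G) := (nth dflt Gl g).1.
Definition bg (g : 'I_G) := (nth dflt Gl g).2.1.
Definition Pg (g : 'I_G) := (nth dflt Gl g).2.2.
Definition pchunk (g : 'I_G) (i : nat) := rst (Mg g) (nth (bg g) (Pg g) i).
Definition Bm := \sum_(t <- Gl) \sum_c (t.2.1 c + \sum_(p <- t.2.2) p c).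
Definition B := Bm.+1.
Definition NState := (('I_G * {ffun Sigma -> 'I_B}) + ('I_G * {set Sigma}))%type.

Definition step (q : NState) (a : Sigma) (q' : NState) : bool :=
  match q, q' with
  | inl (g, d), inl (g', d') => (g' == g) && (a \notin Mg g) &&
      ( (0 < d a) && [forall c, val (d' c) == val (d c) - (c == a)]
      || [forall c, val (d c) == 0] &&
         [exists i : 'I_(size (Pg g)), forall c, val (d' c) + (c == a) == pchunk g i c] )
  | inl (g, d), inr (g', R) => (g' == g) && (a \in Mg g) &&
      [forall c, val (d c) == 0] && (R == nxt (Mg g) set0 a)
  | inr (g, R), inr (g', R') => (g' == g) && (a \in Mg g) && (R' == nxt (Mg g) R a)
  | inr _, inl _ => false
  end.

Definition stepset (X : {set NState}) (a : Sigma) : {set NState} :=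
  [set q' | [exists q in X, step q a q']].
Definition init0 : {set NState} :=
  [set q : NState | if q is inl (g, d) then [forall c, val (d c) == rst (Mg g) (bg g) c]
                    else false].
Definition accS : {set {set NState}} :=
  [set X : {set NState} | [exists g : 'I_G, inr (g, set0) \in X]].
Definition Aut : automaton Sigma :=
  @Automaton Sigma {set NState} (fun X a => [set stepset X a]) [set init0] accS.

Lemma Aut_det : deterministic Aut.
Proof. by split=> [|q s]; rewrite cards1. Qed.

Fixpoint reads (q : NState) (s : seq Sigma) (q' : NState) : Prop :=
  match s with [::] => q = q' | a :: s' => exists2 q1, step q a q1 & reads q1 s' q' end.

Definition Sfold (X : {set NState}) (s : seq Sigma) := foldl stepset X s.

Lemma Sfold_reads X s q :
  q \in Sfold X s <-> exists2 q0, q0 \in X & reads q0 s q.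
Proof.
elim: s X => [|a s IH] X /=.
  by split=> [H|[q0 H <-]] //; exists q.
rewrite /Sfold /= -/(Sfold _ _) IH; split.
  move=> [q1]; rewrite inE => /existsP[q0 /andP[H0 Hs]] Hr.
  by exists q0 => //; exists q1.
move=> [q0 H0 [q1 Hs Hr]]; exists q1 => //.
by rewrite inE; apply/existsP; exists q0; rewrite H0.
Qed.

Lemma reads_cat q s1 q1 s2 q2 : reads q s1 q1 -> reads q1 s2 q2 -> reads q (s1 ++ s2) q2.
Proof.
elim: s1 q => [|a s IH] q /=; first by move=> ->.
by move=> [q3 H1 H2] H3; exists q3 => //; apply: IH H2 H3.
Qed.

Lemma reads_rcons q s q1 a q2 : reads q s q1 -> step q1 a q2 -> reads q (rcons s a) q2.
Proof. by move=> H1 H2; rewrite -cats1; apply: reads_cat H1 _; exists q2. Qed.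

Lemma reads_path x0 q0 s q : reads q0 s q ->
  exists r : nat -> NState, [/\ r 0 = q0, r (size s) = q &
     forall n, n < size s -> step (r n) (nth x0 s n) (r n.+1)].
Proof.
elim: s q0 => [|a s IH] q0 /=.
  by move=> ->; exists (fun _ => q); split.
move=> [q1 H1 /IH [r [H0 Hs Hst]]].
exists (fun n => if n is n'.+1 then r n' else q0); split=> //.
by case=> [|n] /=; rewrite ?H0 // ltnS; apply: Hst.
Qed.

Lemma lang_Sfold w r : run Aut w r -> forall t, r t = Sfold init0 (mkseq w t).
Proof.
move=> [H0 HS]; elim=> [|t IH]; first by move: H0; rewrite inE => /eqP.
by move: (HS t); rewrite inE IH mkseqS /Sfold foldl_rcons => /eqP.
Qed.

Lemma Sfold_lang w :
  (forall N, exists n, N <= n /\ exists g : 'I_G, inr (g, set0) \in Sfold init0 (mkseq w n)) ->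
  lang Aut w.
Proof.
move=> H; exists (fun t => Sfold init0 (mkseq w t)); split.
  split=> [|n]; first by rewrite inE.
  by rewrite mkseqS /Sfold foldl_rcons inE.
move=> N; have [n [Hn [g Hg]]] := H N; exists n; split=> //.
by rewrite inE; apply/existsP; exists g.
Qed.


Definition valid (w : oword Sigma) (r : nat -> NState) n :=
  forall m, m < n -> step (r m) (w m) (r m.+1).

Lemma inv1 w r : r 0 \in init0 -> forall n, valid w r n ->
  forall g d, r n = inl (g, d) ->
  (exists lam : nat -> nat, forall c, cnt w c n + d c =
      rst (Mg g) (bg g) c + \sum_(i < size (Pg g)) lam i * pchunk g i c)
  /\ (forall m, m < n -> w m \notin Mg g).
Proof.
move=> Hi; elim=> [|n IH] Hv g d Hr.
  move: Hi; rewrite Hr inE => /forallP Hd; split=> // ; exists (fun _ => 0) => c.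
  by rewrite /cnt big_ord0 (eqP (Hd c)) big1 ?addn0.
have Hv' : valid w r n by move=> m Hm; apply: Hv; apply: ltnW.
have := Hv n (ltnSn n); rewrite Hr.
case E: (r n) => [[g0 d0]|[g0 R0]] //= /andP[/andP[/eqP Eg HM] Hc].
subst g0; have [[lam Hlam] Hm] := IH Hv' g d0 E.
split; last by move=> m; rewrite ltnS leq_eqVlt => /orP[/eqP->|/Hm].
case/orP: Hc => [/andP[Hpos /forallP Hd]|/andP[/forallP H0 /existsP[i /forallP Hd]]].
  exists lam => c; rewrite -Hlam cntS (eqP (Hd c)) -addnA; congr (_ + _).
  case: (eqVneq c (w n)) => [->|ne]; first by rewrite add1n subn1 prednK.
  by rewrite add0n subn0.
exists (fun j => lam j + (j == val i)) => c.
have E1 : \sum_(j < size (Pg g)) (lam j + (val j == val i)) * pchunk g j c =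
   \sum_(j < size (Pg g)) lam j * pchunk g j c + pchunk g i c.
  under eq_bigr => j _ do rewrite mulnDl.
  rewrite big_split /=; congr (_ + _).
  rewrite (bigD1 i) //= eqxx mul1n big1 ?addn0 // => j Hj.
  have -> : (val j == val i) = (j == i) by [].
  by rewrite (negbTE Hj) mul0n.
rewrite E1 addnA -Hlam (eqP (H0 c)) addn0 cntS -addnA -(eqP (Hd c)).
by rewrite eq_sym [_ + d c]addnC.
Qed.

Fixpoint Rs (w : oword Sigma) (M : {set Sigma}) (e n : nat) : {set Sigma} :=
  if n is n'.+1 then (if n' < e then set0 else nxt M (Rs w M e n') (w n')) else set0.

Lemma Rs_le w M e n : n <= e -> Rs w M e n = set0.
Proof. by case: n => //= n H; rewrite H. Qed.

Lemma inv2 w r : r 0 \in init0 -> forall n, valid w r n ->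
  forall g R, r n = inr (g, R) ->
  exists e, [/\ e < n, w e \in Mg g, (forall m, m < e -> w m \notin Mg g),
    (forall m, e <= m < n -> w m \in Mg g)
    & (exists lam : nat -> nat, forall c, cnt w c e =
      rst (Mg g) (bg g) c + \sum_(i < size (Pg g)) lam i * pchunk g i c)
      /\ R = Rs w (Mg g) e n].
Proof.
move=> Hi; elim=> [|n IH] Hv g R Hr.
  by move: Hi; rewrite Hr inE.
have Hv' : valid w r n by move=> m Hm; apply: Hv; apply: ltnW.
have := Hv n (ltnSn n); rewrite Hr.
case E: (r n) => [[g0 d0]|[g0 R0]] //=.
  move=> /andP[/andP[/andP[/eqP Eg HM] /forallP H0] /eqP ER]; subst g0.
  have [[lam Hlam] Hm] := inv1 Hi Hv' E.
  exists n; split=> //.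
  - by move=> m /andP[H1 H2]; have -> : m = n by apply/eqP; rewrite eqn_leq H1 andbT -ltnS.
  - split; first by exists lam => c; rewrite -Hlam (eqP (H0 c)) addn0.
    by rewrite /= ltnn Rs_le.
move=> /andP[/andP[/eqP Eg HM] /eqP ER]; subst g0.
have [e [He1 He2 He3 He4 [He5 He6]]] := IH Hv' g R0 E.
exists e; split=> //.
- exact: ltnW.
- move=> m /andP[H1]; rewrite ltnS leq_eqVlt => /orP[/eqP->//|H2].
  by apply: He4; rewrite H1.
- by split=> //; rewrite /= ltnNge (ltnW He1) /= -He6.
Qed.

Lemma cnt_stay (w : oword Sigma) a e : (forall m, e <= m -> w m != a) ->
  forall n, e <= n -> cnt w a n = cnt w a e.
Proof.
move=> H; elim=> [|n IH]; first by rewrite leqn0 => /eqP->.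
rewrite leq_eqVlt => /orP[/eqP->//|Hn].
by rewrite cntS (negbTE (H n Hn)) addn0 IH.
Qed.

Lemma Rs_hit w (M : {set Sigma}) e (a : Sigma) t1 t2 : a \in M -> e < t1 -> t1 < t2 ->
  Rs w M e t1 = set0 -> Rs w M e t2 = set0 -> exists u, t1 <= u < t2 /\ w u = a.
Proof.
move=> Ha He Ht Ht1 Ht2.
have Q : forall k, (forall u, t1 <= u < t1 + k -> w u != a) ->
    a \notin Rs w M e (t1 + k) /\ (0 < k -> Rs w M e (t1 + k) != set0).
  elim=> [|k IH] H; first by rewrite addn0 Ht1 in_set0.
  have [IH1 _] : a \notin Rs w M e (t1 + k) /\ (0 < k -> Rs w M e (t1 + k) != set0).
    by apply: IH => u /andP[H1 H2]; apply: H; rewrite H1 addnS ltnS ltnW.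
  have Hw : w (t1 + k) != a by apply: H; rewrite leq_addr addnS ltnSn.
  rewrite addnS /= ltnNge (leq_trans (ltnW He) (leq_addr k t1)) /= /nxt.
  have Ha' : a \notin w (t1 + k) |: Rs w M e (t1 + k).
    by rewrite in_setU1 negb_or eq_sym Hw IH1.
  case: eqP => [E|_]; first by rewrite E Ha in Ha'.
  split=> // _; apply/set0Pn; exists (w (t1 + k)); exact: setU11.
case: (boolP [exists u : 'I_t2, (t1 <= u) && (w u == a)]).
  by move=> /existsP[u /andP[H1 /eqP H2]]; exists u; rewrite H1 ltn_ord.
move=> /existsPn Hn; exfalso.
have HQ : forall u, t1 <= u < t1 + (t2 - t1) -> w u != a.
  move=> u; rewrite subnKC ?(ltnW Ht) // => /andP[H1 H2].
  by have := Hn (Ordinal H2); rewrite /= H1.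
have [_ H] := Q _ HQ; move: H.
by rewrite subnKC ?(ltnW Ht) // Ht2 subn_gt0 eqxx => /(_ Ht).
Qed.

Lemma C1 w : lang Aut w -> exists g : 'I_G, exists lam : nat -> nat,
  parikh w (mask_add [ffun c => bg g c + \sum_(i < size (Pg g)) lam i * nth (bg g) (Pg g) i c]
                     (maskof (Mg g))).
Proof.
move=> [r [Hrun Hacc]].
have Hr := lang_Sfold Hrun.
have : forall N, exists n, N <= n /\
    exists g : 'I_G, inr (g, set0) \in Sfold init0 (mkseq w n).
  move=> N; have [n [Hn]] := Hacc N; rewrite /= inE Hr => /existsP[g Hg].
  by exists n; split=> //; exists g.
move/inf_pigeon => [g Hg].
have info : forall n, inr (g, set0) \in Sfold init0 (mkseq w n) ->
  exists e, [/\ e < n, w e \in Mg g, (forall m, m < e -> w m \notin Mg g),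
    (forall m, e <= m < n -> w m \in Mg g)
    & (exists lam : nat -> nat, forall c, cnt w c e =
      rst (Mg g) (bg g) c + \sum_(i < size (Pg g)) lam i * pchunk g i c)
      /\ set0 = Rs w (Mg g) e n].
  move=> n /Sfold_reads [q0 Hq0 /(reads_path (w 0)) [r' [H0 Hs Hst]]].
  rewrite size_mkseq in Hs.
  apply: (inv2 (r:=r')); [by rewrite H0 | | exact Hs].
  move=> m Hm; move: (Hst m); rewrite size_mkseq nth_mkseq //; exact.
have [n0 [_ Hn0]] := Hg 0.
have [e0 [He1 He2 He3 He4 [[lam Hlam] He6]]] := info n0 Hn0.
have uniq_e : forall e, w e \in Mg g -> (forall m, m < e -> w m \notin Mg g) -> e = e0.
  move=> e H1 H2; case: (ltngtP e e0) => // H.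
    by have := He3 _ H; rewrite H1.
  by have := H2 _ H; rewrite He2.
have Hafter : forall m, e0 <= m -> w m \in Mg g.
  move=> m Hm; have [n [Hn Hq]] := Hg m.+1; have [e [_ H1 H2 H3 _]] := info n Hq.
  by rewrite (uniq_e e H1 H2) in H3; apply: H3; rewrite Hm.
have Hres : forall N, exists n, N <= n /\ e0 < n /\ Rs w (Mg g) e0 n = set0.
  move=> N; have [n [Hn Hq]] := Hg N; have [e [H0 H1 H2 _ [_ H6]]] := info n Hq.
  by rewrite (uniq_e e H1 H2) in H0 H6; exists n.
exists g, lam => a; rewrite !ffunE.
case: (boolP (a \in Mg g)) => Ha /=.
  apply: inf_unb => N.
  have [t1 [Ht1 [He Rt1]]] := Hres (maxn N e0.+1).
  have [t2 [Ht2 [_ Rt2]]] := Hres t1.+1.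
  have [u [/andP[Hu1 Hu2] Hu]] := Rs_hit Ha He Ht2 Rt1 Rt2.
  exists u; split=> //; exact: leq_trans (leq_maxl _ _) (leq_trans Ht1 Hu1).
exists e0 => n Hn.
have Hne : forall m, e0 <= m -> w m != a.
  by move=> m Hm; apply/eqP => E; move: (Hafter m Hm); rewrite E (negbTE Ha).
rewrite (cnt_stay Hne Hn) Hlam /pchunk /rst ffunE (negbTE Ha); congr (_ + _).
by apply: eq_bigr => i _; rewrite ffunE (negbTE Ha).
Qed.

Lemma le_sum_mem (T : eqType) (s : seq T) (F : T -> nat) y :
  y \in s -> F y <= \sum_(z <- s) F z.
Proof.
elim: s => [//|a s IH]; rewrite in_cons big_cons => /orP[/eqP->|/IH H].
  exact: leq_addr.
exact: leq_trans H (leq_addl _ _).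
Qed.

Lemma le_sum_fin (T : finType) (F : T -> nat) y : F y <= \sum_z F z.
Proof. by rewrite (bigD1 y) //= leq_addr. Qed.

Lemma bnd_trip (g : 'I_G) c :
  (nth dflt Gl g).2.1 c + \sum_(p <- (nth dflt Gl g).2.2) p c <= Bm.
Proof.
apply: leq_trans (le_sum_fin (fun c => (nth dflt Gl g).2.1 c + _) c) _.
apply: (le_sum_mem (fun t : trip => \sum_c (t.2.1 c + \sum_(p <- t.2.2) p c))).
exact: mem_nth.
Qed.

Lemma bnd_b (g : 'I_G) c : bg g c <= Bm.
Proof. exact: leq_trans (leq_addr _ _) (bnd_trip g c). Qed.

Lemma bnd_p (g : 'I_G) i c : i < size (Pg g) -> nth (bg g) (Pg g) i c <= Bm.
Proof.
move=> Hi; apply: leq_trans (bnd_trip g c); apply: leq_trans (leq_addl _ _).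
apply: (le_sum_mem (fun p : {ffun Sigma -> nat} => p c)); exact: mem_nth.
Qed.

Lemma rst_le M y c : @rst Sigma M y c <= y c.
Proof. by rewrite ffunE; case: ifP. Qed.

Definition mkd (f : Sigma -> nat) : {ffun Sigma -> 'I_B} := [ffun c => inord (f c)].

Lemma mkdE f c : f c <= Bm -> val (mkd f c) = f c.
Proof. by move=> H; rewrite ffunE /= inordK // ltnS. Qed.

Definition zero := mkd (fun _ => 0).

Definition vw (y : {ffun Sigma -> nat}) : seq Sigma :=
  flatten [seq nseq (y c) c | c <- enum Sigma].

Lemma count_vw y a : count_mem a (vw y) = y a.
Proof.
rewrite /vw count_flatten -map_comp sumnE big_map.
rewrite (eq_bigr (fun c => (c == a) * y c)); last by move=> c _; rewrite /= count_nseq.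
rewrite big_enum /= (bigD1 a) //= eqxx mul1n big1 ?addn0 //.
by move=> c /negbTE ->.
Qed.

Lemma mem_vw y a : a \in vw y -> 0 < y a.
Proof. by rewrite -has_pred1 has_count count_vw. Qed.

Lemma dec (g : 'I_G) (s : seq Sigma) (d : {ffun Sigma -> 'I_B}) : (forall x, x \in s -> x \notin Mg g) ->
  (forall c, count_mem c s <= d c) ->
  reads (inl (g, d)) s (inl (g, mkd (fun c => d c - count_mem c s))).
Proof.
elim: s d => [|a s IH] d Hs Hc /=.
  congr (inl (_, _)); apply/ffunP => c; apply/val_inj.
  by rewrite /= ffunE inordK ?subn0 // ltn_ord.
have HdB : forall c, d c - (c == a) <= Bm by move=> c; rewrite -ltnS; exact: leq_ltn_trans (leq_subr _ _) (ltn_ord _).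
set d1 := mkd (fun c => d c - (c == a)).
exists (inl (g, d1)).
  rewrite /= eqxx Hs ?mem_head //=; apply/orP; left; apply/andP; split.
    by have := Hc a; rewrite /= eqxx add1n => H; exact: leq_trans (ltn0Sn _) H.
  by apply/forallP => c; rewrite mkdE.
have -> : mkd (fun c => d c - count_mem c (a :: s)) = mkd (fun c => d1 c - count_mem c s).
  by apply/ffunP => c; rewrite [LHS]ffunE [RHS]ffunE mkdE // /= subnDA eq_sym.
apply: IH => [x Hx|c]; first by apply: Hs; rewrite in_cons Hx orbT.
have := Hc c; rewrite /= mkdE // eq_sym => H.
by rewrite leq_subRL // (leq_trans (leq_addr _ _) H).
Qed.

Lemma dec_full (g : 'I_G) (d : {ffun Sigma -> 'I_B}) (y : {ffun Sigma -> nat}) : (forall c, val (d c) = y c) ->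
  (forall c, c \in Mg g -> y c = 0) -> reads (inl (g, d)) (vw y) (inl (g, zero)).
Proof.
move=> Hd HM.
have -> : zero = mkd (fun c => d c - count_mem c (vw y)).
  by apply/ffunP => c; rewrite !ffunE count_vw Hd subnn.
apply: dec => [x /mem_vw Hx|c]; last by rewrite count_vw Hd.
by apply/negP => /HM E; rewrite E in Hx.
Qed.

Lemma chunk (g : 'I_G) (i : 'I_(size (Pg g))) :
  reads (inl (g, zero)) (vw (pchunk g i)) (inl (g, zero)).
Proof.
set y := pchunk g i.
have HyB : forall c, y c <= Bm by move=> c; exact: leq_trans (rst_le _ _ _) (bnd_p _ (ltn_ord i)).
have HyM : forall c, c \in Mg g -> y c = 0 by move=> c Hc; rewrite /y /pchunk /rst ffunE Hc.
case E: (vw y) => [|a s] //=.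
have Ha : 0 < y a by apply: mem_vw; rewrite E mem_head.
have HaM : a \notin Mg g by apply/negP => /HyM E'; rewrite E' in Ha.
set d1 := mkd (fun c => y c - (c == a)).
have Hd1 : forall c, val (d1 c) = y c - (c == a).
  by move=> c; rewrite mkdE //; exact: leq_trans (leq_subr _ _) (HyB c).
exists (inl (g, d1)).
  rewrite /= eqxx HaM /=; apply/orP; right; apply/andP; split.
    by apply/forallP => c; rewrite mkdE.
  apply/existsP; exists i; apply/forallP => c; rewrite Hd1 subnK //.
  by case: eqP => [->|]; rewrite ?Ha.
have Hcs : forall c, count_mem c s = y c - (c == a).
  by move=> c; have := count_vw y c; rewrite E /= eq_sym => <-; rewrite addKn.
have -> : zero = mkd (fun c => d1 c - count_mem c s).
  by apply/ffunP => c; rewrite /zero [LHS]ffunE [RHS]ffunE Hd1 Hcs subnn.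
apply: dec => [x Hx|c]; last by rewrite Hcs Hd1.
have : 0 < y x by apply: mem_vw; rewrite E in_cons Hx orbT.
by case: (boolP (x \in Mg g)) => // /HyM ->.
Qed.

Lemma reads_nseq (g : 'I_G) k s : reads (inl (g, zero)) s (inl (g, zero)) ->
  reads (inl (g, zero)) (flatten (nseq k s)) (inl (g, zero)).
Proof. by move=> H; elim: k => [|k IH] //=; apply: reads_cat H IH. Qed.

Definition uw (g : 'I_G) (lam : nat -> nat) : seq Sigma :=
  vw (rst (Mg g) (bg g)) ++
  flatten [seq flatten (nseq (lam i) (vw (pchunk g i))) | i <- iota 0 (size (Pg g))].

Definition d0 (g : 'I_G) := mkd (rst (Mg g) (bg g)).

Lemma d0_init g : inl (g, d0 g) \in init0.
Proof.
rewrite inE; apply/forallP => c; rewrite mkdE //.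
exact: leq_trans (rst_le _ _ _) (bnd_b _ _).
Qed.

Lemma reads_u g lam : reads (inl (g, d0 g)) (uw g lam) (inl (g, zero)).
Proof.
apply: reads_cat.
  apply: dec_full => [c|c Hc]; last by rewrite /rst ffunE Hc.
  rewrite mkdE //; exact: leq_trans (rst_le _ _ _) (bnd_b _ _).
have : forall i, i \in iota 0 (size (Pg g)) ->
   reads (inl (g, zero)) (flatten (nseq (lam i) (vw (pchunk g i)))) (inl (g, zero)).
  move=> i; rewrite mem_iota add0n => Hi; apply: reads_nseq.
  exact: (chunk (Ordinal Hi)).
elim: (iota 0 (size (Pg g))) => [|i l IH] H //=.
apply: reads_cat (H i (mem_head _ _)) (IH _) => j Hj.
by apply: H; rewrite in_cons Hj orbT.
Qed.

Lemma cyc (g : 'I_G) (x0 : Sigma) (q : NState) :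
  (forall a R, a \in Mg g -> step q a (inr (g, R)) = (R == nxt (Mg g) set0 a)) ->
  0 < size (enum (Mg g)) -> reads q (enum (Mg g)) (inr (g, set0)).
Proof.
move=> Hq Hk; set eM := enum (Mg g).
have HR : forall j, j < size eM ->
    [set x in take j.+1 eM] = nth x0 eM j |: [set x in take j eM].
  by move=> j Hj; rewrite (take_nth x0 Hj); apply/setP => z; rewrite !inE mem_rcons in_cons.
have Hcard : forall j, j <= size eM -> #|[set x in take j eM]| = j.
  move=> j Hj; rewrite cardsE.
  by have/card_uniqP -> := take_uniq j (enum_uniq (Mg g)); rewrite size_takel.
have Hmem : forall j, j < size eM -> nth x0 eM j \in Mg g.
  by move=> j Hj; rewrite -mem_enum; apply: mem_nth.
have key : forall j, j < size eM ->
    reads q (take j.+1 eM) (inr (g, nxt (Mg g) [set x in take j eM] (nth x0 eM j))).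
  elim=> [|j IH] Hj.
    have Hh := Hmem 0 Hj.
    case E: eM Hj Hh => [//|h t] _ /= Hh.
    exists (inr (g, nxt (Mg g) set0 h)); first by rewrite Hq // eqxx.
    rewrite take0 /=; by congr (inr (_, nxt _ _ _)); apply/setP => z; rewrite !inE.
  rewrite (take_nth x0 Hj); apply: reads_rcons (IH (ltnW Hj)) _.
  have -> : nxt (Mg g) [set x in take j eM] (nth x0 eM j) = [set x in take j.+1 eM].
    rewrite /nxt -(HR j (ltnW Hj)); case: eqP => // E.
    by have := Hcard j.+1 (ltnW Hj); rewrite E cardE -/eM => E'; rewrite E' ltnn in Hj.
  by rewrite /= eqxx Hmem //= eqxx.
have Hk1 : (size eM).-1 < size eM by rewrite prednK.
have := key _ Hk1; rewrite prednK // take_size.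
have -> : nxt (Mg g) [set x in take (size eM).-1 eM] (nth x0 eM (size eM).-1) = set0.
  by rewrite /nxt -(HR _ Hk1) prednK // take_size set_enum eqxx.
done.
Qed.

Lemma mkseq_add T (f : nat -> T) m n :
  mkseq f (m + n) = mkseq f m ++ mkseq (fun i => f (m + i)) n.
Proof.
rewrite /mkseq iotaD map_cat add0n; congr (_ ++ _).
by rewrite -[in iota m n](addn0 m) iotaDl -map_comp.
Qed.

Lemma flat_nseqS T (s : seq T) j : flatten (nseq j.+1 s) = flatten (nseq j s) ++ s.
Proof. by elim: j => [|j IH] /=; rewrite ?cats0 // -catA -IH. Qed.

Definition ww (g : 'I_G) lam (x0 : Sigma) : oword Sigma := fun n =>
  if n < size (uw g lam) then nth x0 (uw g lam) n
  else nth x0 (enum (Mg g)) ((n - size (uw g lam)) %% size (enum (Mg g))).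

Lemma ww_pre g lam x0 : mkseq (ww g lam x0) (size (uw g lam)) = uw g lam.
Proof.
apply: (eq_from_nth (x0 := x0)); rewrite ?size_mkseq // => i Hi.
by rewrite nth_mkseq // /ww Hi.
Qed.

Lemma ww_blk g lam x0 j : 0 < size (enum (Mg g)) ->
  mkseq (fun i => ww g lam x0 (size (uw g lam) + j * size (enum (Mg g)) + i))
        (size (enum (Mg g))) = enum (Mg g).
Proof.
move=> Hk; apply: (eq_from_nth (x0 := x0)); rewrite ?size_mkseq // => i Hi.
rewrite nth_mkseq // /ww -addnA ltnNge leq_addr /= addKn modnMDl modn_small //.
Qed.

Lemma ww_mk g lam x0 j : 0 < size (enum (Mg g)) ->
  mkseq (ww g lam x0) (size (uw g lam) + j * size (enum (Mg g))) =
  uw g lam ++ flatten (nseq j (enum (Mg g))).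
Proof.
move=> Hk; elim: j => [|j IH]; first by rewrite mul0n addn0 cats0 ww_pre.
by rewrite mulSnr addnA mkseq_add IH ww_blk // flat_nseqS catA.
Qed.

Lemma C2 (g : 'I_G) (lam : nat -> nat) : Mg g != set0 -> exists w, lang Aut w /\
  parikh w (mask_add [ffun c => bg g c + \sum_(i < size (Pg g)) lam i * nth (bg g) (Pg g) i c]
                     (maskof (Mg g))).
Proof.
move=> Hne; have [x0 Hx0] := set0Pn _ Hne.
have Hk : 0 < size (enum (Mg g)) by rewrite -cardE card_gt0.
set k := size (enum (Mg g)).
exists (ww g lam x0); split.
  apply: Sfold_lang => N; exists (size (uw g lam) + N.+1 * k); split.
    exact: leq_trans (leq_trans (leqnSn N) (leq_pmulr _ Hk)) (leq_addl _ _).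
  exists g; rewrite ww_mk //=; apply/Sfold_reads; exists (inl (g, d0 g)).
    exact: d0_init.
  apply: reads_cat (reads_u g lam) _.
  apply: reads_cat.
    apply: (cyc x0) Hk => a R Ha; rewrite /= eqxx Ha /=.
    have -> // : [forall c, val (zero c) == 0].
    by apply/forallP => c; rewrite mkdE.
  elim: N => [|N IH] //=; apply: reads_cat IH.
  by apply: (cyc x0) Hk => a R Ha; rewrite /= eqxx Ha.
move=> a; rewrite !ffunE; case: (boolP (a \in Mg g)) => Ha /=.
  apply: inf_unb => N.
  exists (size (uw g lam) + N * k + index a (enum (Mg g))); split.
    apply: leq_trans (leq_pmulr _ Hk) _; rewrite -addnA (addnC (N * k)) addnA.
    exact: leq_addl.
  rewrite /ww -addnA ltnNge leq_addr /= addKn modnMDl modn_small ?index_mem ?mem_enum //.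
  by rewrite nth_index // mem_enum.
exists (size (uw g lam)) => n Hn.
have Hne' : forall m, size (uw g lam) <= m -> ww g lam x0 m != a.
  move=> m Hm; rewrite /ww ltnNge Hm /=.
  have : nth x0 (enum (Mg g)) ((m - size (uw g lam)) %% k) \in enum (Mg g).
    by apply: mem_nth; apply: ltn_pmod.
  rewrite mem_enum => H; apply/eqP => E; by rewrite E (negbTE Ha) in H.
rewrite (cnt_stay Hne' Hn) cnt_mkseq ww_pre /uw count_cat count_vw count_flatten -map_comp.
rewrite (eq_map (g := fun i => lam i * pchunk g i a)); last first.
  move=> i /=; rewrite count_flatten map_nseq sumn_nseq count_vw mulnC //.
rewrite sumnE big_map.
have -> : iota 0 (size (Pg g)) = index_iota 0 (size (Pg g)) by rewrite /index_iota subn0.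
rewrite big_mkord /rst ffunE (negbTE Ha); congr (_ + _).
by apply: eq_bigr => i _; rewrite /pchunk /rst ffunE (negbTE Ha).
Qed.

End Constr.

Lemma mask_ok (Sigma : finType) (M : {set Sigma}) : M != set0 -> is_mask (maskof M).
Proof.
move=> HM; split.
  by move=> a; rewrite ffunE; case: ifP; auto.
by have [a Ha] := set0Pn _ HM; exists a; rewrite ffunE Ha.
Qed.

Theorem lemma3 (Sigma : finType) (S : {ffun Sigma -> ninf} -> Prop) :
  masked_semilinear S ->
  exists A : automaton Sigma, deterministic A /\
    forall v : {ffun Sigma -> ninf}, (exists w, Jclosure A w /\ parikh w v) <-> S v.
Proof.
move=> [Sm [H1 H2]].
have HL : forall M : {set Sigma},
    exists L0 : seq ({ffun Sigma -> nat} * seq {ffun Sigma -> nat}),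
    M != set0 -> forall x, Sm (maskof M) x <-> exists2 bP, bP \in L0 & linear_set bP.1 bP.2 x.
  move=> M; case: (boolP (M == set0)) => [_|HM]; first by exists [::].
  by have [L0 HL0] := H1 _ (mask_ok HM); exists L0.
pose L := fun M => proj1_sig (constructive_indefinite_description _ (HL M)).
have HLs : forall M, M != set0 -> forall x,
    Sm (maskof M) x <-> exists2 bP, bP \in L M & linear_set bP.1 bP.2 x.
  by move=> M; exact: (proj2_sig (constructive_indefinite_description _ (HL M))).
exists (Aut L); split; first exact: Aut_det.
have Gmem : forall g : 'I_(G L), Mg g != set0 /\ (bg g, Pg g) \in L (Mg g).
  move=> g; have := mem_nth (@dflt Sigma) (ltn_ord g).
  rewrite {2}/Gl => /allpairsPdep [M [bP [HM HbP E]]].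
  rewrite /Mg /bg /Pg E /=; rewrite mem_enum inE in HM; split=> //.
  by case: bP HbP E.
move=> v; split.
  move=> [w [[w' [[v' [Hv' Hw'v']] Hl]] Hwv]].
  have Ev : v = v' := parikh_uniq Hwv Hv'.
  have [g [lam Hp]] := C1 Hl.
  have Ev' := parikh_uniq Hw'v' Hp.
  apply/H2; exists (maskof (Mg g)); split; first exact: mask_ok (Gmem g).1.
  exists [ffun c => bg g c + \sum_(i < size (Pg g)) lam i * nth (bg g) (Pg g) i c];
    last by rewrite Ev Ev'.
  apply/(HLs _ (Gmem g).1); exists (bg g, Pg g); first exact: (Gmem g).2.
  by exists lam => a; rewrite ffunE.
move/H2 => [m [Hm [x Hx Ev]]].
set M := [set a | m a == None].
have EM : m = maskof M.
  apply/ffunP => a; rewrite ffunE inE; case: Hm => Hm _.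
  by case: (Hm a) => ->.
have HMne : M != set0.
  by case: Hm => _ [a Ha]; apply/set0Pn; exists a; rewrite inE Ha.
rewrite EM in Hx Ev.
have [bP HbP [lam Hlam]] := (HLs M HMne x).1 Hx.
have Hin : (M, bP) \in Gl L.
  by apply/allpairsPdep; exists M, bP; split => //; rewrite mem_enum inE.
have Hidx : index (M, bP) (Gl L) < G L by rewrite index_mem.
pose g : 'I_(G L) := Ordinal Hidx.
have Eg : nth (@dflt Sigma) (Gl L) g = (M, bP) by rewrite nth_index.
have HgM : Mg g != set0 by rewrite /Mg Eg.
have [w [Hl Hp]] := C2 lam HgM.
have Hpv : parikh w v.
  move: Hp; rewrite /Mg /bg /Pg Eg /= Ev.
  have -> // : x = [ffun c => bP.1 c + \sum_(i < size bP.2) lam i * nth bP.1 bP.2 i c].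
  by apply/ffunP => a; rewrite ffunE Hlam.
exists w; split=> //.
by exists w; split=> //; exists v.
Qed.
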